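(* Let $m$ be an integer with $m \equiv 3 \pmod 4$ and $m \ge 3$, and let $n = 3^m - 1$. Then: (i) the ternary cyclic code $\mathcal{C}_{(0,3,m)}$ has length $n$ and dimension $n/2$, and the ternary cyclic code $\mathcal{C}_{(1,2,m)}$ has length $n$ and dimension $(n+2)/2$; (ii) the ternary cyclic code $\mathcal{C}_{(2,3,m)}$ has length $n$ and dimension $n/2$, and the ternary cyclic code $\mathcal{C}_{(0,1,m)}$ has length $n$ and dimension $(n+2)/2$.
   Context: Let $m \ge 2$ be an integer, $n = 3^m-1$, and let $\alpha$ be a primitive element of $\mathbb{F}_{3^m}$. For an integer $0 \le j \le n-1$ with $3$-adic expansion $j = \sum_{t=0}^{m-1} j_t 3^t$, $j_t \in \{0,1,2\}$, let $w_3(j) = \sum_{t=0}^{m-1} j_t$ (the $3$-weight of $j$). For distinct $i_1, i_2 \in \{0,1,2,3\}$ let $T_{(i_1,i_2,m)} = \{1 \le j \le n-1 : w_3(j) \equiv i_1 \text{ or } i_2 \pmod 4\}$ and $g_{(i_1,i_2,m)}(x) = \prod_{j \in T_{(i_1,i_2,m)}} (x - \alpha^j)$, which lies in $\mathbb{F}_3[x]$. $\mathcal{C}_{(i_1,i_2,m)}$ denotes the ternary cyclic code of length $n$ with generator polynomial $g_{(i_1,i_2,m)}(x)$, i.e. the ideal generated by $g_{(i_1,i_2,m)}(x)$ in $\mathbb{F}_3[x]/(x^n-1)$. *)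

(* Defs.v *)
From HB Require Import structures.
From mathcomp Require Import all_boot all_order all_algebra all_field.
Set Implicit Arguments. Unset Strict Implicit. Unset Printing Implicit Defensive.
Import GRing.Theory.
Local Open Scope ring_scope.

Definition w3 (m j : nat) : nat := (\sum_(t < m) (j %/ 3 ^ t) %% 3)%N.

Definition clen (m : nat) : nat := (3 ^ m - 1)%N.

Definition Tset (i1 i2 m j : nat) : bool :=
  [&& (1 <= j)%N, (j <= clen m - 1)%N &
      ((w3 m j %% 4 == i1 %% 4) || (w3 m j %% 4 == i2 %% 4))%N].

Definition gpoly (F : fieldType) (alpha : F) (i1 i2 m : nat) : {poly F} :=
  \prod_(0 <= j < clen m | Tset i1 i2 m j) ('X - (alpha ^+ j)%:P).

Definition inF3 (F : fieldType) (x : 'F_3) : F := (nat_of_ord x)%:R.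

Definition wpoly (n : nat) (c : 'rV['F_3]_n) : {poly 'F_3} := \sum_(i < n) (c 0 i)%:P * 'X^i.

(* membership in the cyclic code C_(i1,i2,m): the ideal generated by g in
   F_3[x]/(x^n - 1), words identified with their polynomial representatives
   of degree < n.  The identity c(x) = a(x) g(x) mod (x^n - 1) is checked
   after embedding F_3[x] into F[x] (g has its coefficients in F_3). *)
Definition in_code (F : fieldType) (alpha : F) (i1 i2 m : nat)
    (c : 'rV['F_3]_(clen m)) : Prop :=
  exists a : {poly 'F_3},
    map_poly (@inF3 F) (wpoly c) =
    (map_poly (@inF3 F) a * gpoly alpha i1 i2 m) %% ('X^(clen m) - 1).

Definition code_dim (F : fieldType) (alpha : F) (i1 i2 m k : nat) : Prop :=
  exists V : {vspace 'rV['F_3]_(clen m)},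
    (forall c, c \in V <-> in_code alpha i1 i2 c) /\ \dim V = k.

(* Main.v *)
Require Import Defs.
From HB Require Import structures.
From mathcomp Require Import all_boot all_order all_algebra all_field.
From mathcomp Require Import zify ring.
Import GRing.Theory.
Set Implicit Arguments. Unset Strict Implicit.
Lemma w3S m j : w3 m.+1 j = (j %% 3 + w3 m (j %/ 3))%N.
Proof.
rewrite /w3 big_ord_recl /= expn0 divn1; congr (_ + _)%N.
by apply: eq_bigr => t _; rewrite /bump /= add1n expnS divnMA.
Qed.

Lemma w3_0 m : w3 m 0 = 0%N.
Proof. by rewrite /w3 big1 // => t _; rewrite div0n. Qed.

Lemma w3_top m : w3 m (3 ^ m - 1) = (2 * m)%N.
Proof.
elim: m => [|m IH]; first by rewrite /w3 big_ord0.
have e : (3 ^ m.+1 - 1 = 3 * (3 ^ m - 1) + 2)%N.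
  have := expn_gt0 3 m; rewrite expnS; lia.
rewrite w3S e.
have -> : ((3 * (3 ^ m - 1) + 2) %% 3 = 2)%N by rewrite mulnC modnMDl.
have -> : ((3 * (3 ^ m - 1) + 2) %/ 3 = 3 ^ m - 1)%N.
  by rewrite mulnC divnMDl // divn_small // addn0.
rewrite IH; lia.
Qed.

Lemma w3_hi k d r : (d < 3)%N -> (r < 3 ^ k)%N ->
  w3 k.+1 (d * 3 ^ k + r) = (d + w3 k r)%N.
Proof.
elim: k r => [|k IH] r hd hr.
  have -> : r = 0%N by move: hr; rewrite expn0; lia.
  by rewrite w3S /w3 big_ord0 expn0 muln1 !addn0 modn_small // big_ord0 addn0.
rewrite w3S (w3S k r).
have e : (d * 3 ^ k.+1 + r = (d * 3 ^ k + r %/ 3) * 3 + r %% 3)%N.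
  rewrite expnS; lia.
rewrite e modnMDl modn_mod divnMDl // (divn_small (ltn_pmod _ _)) // addn0.
rewrite IH //; first lia.
by rewrite ltn_divLR // -expnSr.
Qed.

Lemma w3_rot k j : (j < 3 ^ k.+1 - 1)%N ->
  w3 k.+1 ((3 * j) %% (3 ^ k.+1 - 1)) = w3 k.+1 j.
Proof.
move=> hj.
have hk := expn_gt0 3 k.
set d := (j %/ 3 ^ k)%N; set r := (j %% 3 ^ k)%N.
have ej : j = (d * 3 ^ k + r)%N by rewrite /d /r -divn_eq.
have hr : (r < 3 ^ k)%N by rewrite /r ltn_pmod.
have hd : (d < 3)%N by rewrite /d ltn_divLR //; move: hj; rewrite expnS; lia.
have e3 : (3 * j = d * (3 ^ k.+1 - 1) + (3 * r + d))%N.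
  rewrite ej expnS; have := hk; nia.
have hlt : (3 * r + d < 3 ^ k.+1 - 1)%N.
  move: hj; rewrite ej expnS => hj.
  (* 3r + d <= 3*3^k - 1, equality iff r = 3^k-1, d = 2 *)
  nia.
rewrite e3 modnMDl modn_small // ej w3_hi //.
rewrite w3S.
have -> : ((3 * r + d) %% 3 = d)%N by rewrite mulnC modnMDl modn_small.
have -> : ((3 * r + d) %/ 3 = r)%N by rewrite mulnC divnMDl // divn_small // addn0.
by [].
Qed.

Lemma count_iota3 (P : pred nat) Q :
  count P (iota 0 (3 * Q)) =
  (count (fun q => P (3 * q + 0)) (iota 0 Q) + count (fun q => P (3 * q + 1)) (iota 0 Q)
   + count (fun q => P (3 * q + 2)) (iota 0 Q))%N.
Proof.
elim: Q => [|Q IH]; first by rewrite muln0.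
have -> : (3 * Q.+1 = 3 * Q + 3)%N by lia.
rewrite [in LHS]iotaD -[Q.+1]addn1 iotaD !count_cat IH add0n.
rewrite [iota _ 3]/= [iota _ 1]/= /= add0n addn1 addn2 !addn0.
set a := count _ _; set b := count _ _; set c := count _ _.
set x := nat_of_bool _; set y := nat_of_bool _; set z := nat_of_bool _.
lia.
Qed.

Definition Ncnt m r := count (fun j => w3 m j %% 4 == r)%N (iota 0 (3 ^ m)).

Lemma Ncnt_S m r : (r < 4)%N ->
  Ncnt m.+1 r = (Ncnt m r + Ncnt m ((r + 3) %% 4) + Ncnt m ((r + 2) %% 4))%N.
Proof.
move=> hr; rewrite /Ncnt expnS count_iota3.
have E (d : nat) : (d < 3)%N -> count (fun q => w3 m.+1 (3 * q + d) %% 4 == r)%N (iota 0 (3 ^ m))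
   = count (fun j => w3 m j %% 4 == (r + 4 - d) %% 4)%N (iota 0 (3 ^ m)).
  move=> hd; apply: eq_count => q /=; rewrite w3S mulnC modnMDl divnMDl //.
  rewrite (modn_small hd) (divn_small hd) addn0.
  apply/eqP/eqP; lia.
rewrite !E //.
have -> : ((r + 4 - 0) %% 4 = r)%N by rewrite subn0 modnDr modn_small.
have -> : ((r + 4 - 1) %% 4 = (r + 3) %% 4)%N by lia.
have -> : ((r + 4 - 2) %% 4 = (r + 2) %% 4)%N by lia.
by [].
Qed.

Definition Etab (a r : nat) : int :=
  match a, r with
  | 0, 0 => 3 | 0, _ => -1
  | 1, 3 => -3 | 1, _ => 1
  | 2, 2 => 3 | 2, _ => -1
  | _, 1 => -3 | _, _ => 1
  end%R.

Lemma Etab_step a r : (a < 4)%N -> (r < 4)%N ->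
  Etab ((a + 1) %% 4) r = (Etab a r + Etab a ((r + 3) %% 4) + Etab a ((r + 2) %% 4))%R.
Proof.
by case: a => [|[|[|[|?]]]] //; case: r => [|[|[|[|?]]]].
Qed.

Lemma Ncnt_formula m r : (r < 4)%N ->
  ((4 * Ncnt m r)%N%:Z = (3 ^ m)%N%:Z + Etab (m %% 4) r)%R.
Proof.
elim: m r => [|m IH] r hr.
  rewrite /Ncnt /= /w3 big_ord0 mod0n.
  by case: r hr => [|[|[|[|?]]]].
have -> : (m.+1 %% 4 = (m %% 4 + 1) %% 4)%N by rewrite modnDml addn1.
rewrite Ncnt_S // Etab_step ?ltn_pmod //.
have h1 := IH r hr.
have h2 := IH ((r + 3) %% 4)%N (@ltn_pmod _ 4 isT).
have h3 := IH ((r + 2) %% 4)%N (@ltn_pmod _ 4 isT).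
rewrite expnS.
lia.
Qed.

Definition Pw i1 i2 m j := ((w3 m j %% 4 == i1 %% 4) || (w3 m j %% 4 == i2 %% 4))%N.

Lemma Tcount i1 i2 m : (1 <= m)%N -> (i1 %% 4 != i2 %% 4)%N ->
  (count (Tset i1 i2 m) (iota 0 (clen m)) + Pw i1 i2 m 0 + Pw i1 i2 m (clen m)
   = Ncnt m (i1 %% 4) + Ncnt m (i2 %% 4))%N.
Proof.
move=> hm hne.
have h3 : (3 <= 3 ^ m)%N by rewrite -{1}(expn1 3) leq_exp2l.
have -> : (Ncnt m (i1 %% 4) + Ncnt m (i2 %% 4) = count (Pw i1 i2 m) (iota 0 (3 ^ m)))%N.
  rewrite /Ncnt -count_predUI.
  rewrite (@eq_count _ (predI _ _) pred0) ?count_pred0 ?addn0; first by [].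
  move=> j /=; apply/negbTE/negP => /andP [/eqP a /eqP b].
  by move: hne; rewrite -a -b eqxx.
have e : (3 ^ m = 1 + (clen m - 1) + 1)%N by rewrite /clen; lia.
rewrite e !iotaD !count_cat /= !add0n !addn0.
have -> : (1 + (clen m - 1) = clen m)%N by rewrite /clen; lia.
have -> : iota 0 (clen m) = 0%N :: iota 1 (clen m - 1).
  have hc : clen m = (clen m - 1).+1 by rewrite /clen; lia.
  by rewrite [in LHS]hc.
rewrite /= add0n.
rewrite (@eq_in_count _ _ (Pw i1 i2 m)); last first.
  move=> j; rewrite mem_iota => /andP [h1 h2].
  rewrite /Tset /Pw h1 /=. have -> : (j <= clen m - 1)%N by lia. by [].
by rewrite [count _ _ + _]addnC.
Qed.

Lemma Pw0 i1 i2 m : Pw i1 i2 m 0 = ((0 == i1 %% 4) || (0 == i2 %% 4))%N.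
Proof. by rewrite /Pw w3_0. Qed.

Lemma Pwn i1 i2 m : (m %% 4 = 3)%N ->
  Pw i1 i2 m (clen m) = ((2 == i1 %% 4) || (2 == i2 %% 4))%N.
Proof.
move=> hm; rewrite /Pw /clen w3_top.
have -> : ((2 * m) %% 4 = 2)%N by lia.
by [].
Qed.

Lemma cnt_all m i1 i2 : (m %% 4 = 3)%N -> (1 <= m)%N -> (i1 < 4)%N -> (i2 < 4)%N ->
  (i1 != i2)%N ->
  (Posz (count (Tset i1 i2 m) (iota 0 (clen m)) + ((0 == i1) || (0 == i2))%N
    + ((2 == i1) || (2 == i2))%N) * 4
  = Posz (2 * 3 ^ m) + Etab 3 i1 + Etab 3 i2)%R.
Proof.
move=> hm h1 hi1 hi2 hne.
have := Tcount h1 (i1 := i1) (i2 := i2).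
rewrite Pw0 Pwn // !modn_small // => /(_ hne) ->.
have e1 := Ncnt_formula m hi1; have e2 := Ncnt_formula m hi2.
rewrite hm in e1 e2.
rewrite -[(Ncnt _ _ + _)%N]/(Ncnt m i1 + Ncnt m i2)%N.
lia.
Qed.

Lemma cnt03 m : (m %% 4 = 3)%N -> (1 <= m)%N ->
  count (Tset 0 3 m) (iota 0 (clen m)) = (clen m %/ 2)%N.
Proof.
move=> hm h1; have := cnt_all hm h1 (i1 := 0) (i2 := 3) isT isT isT.
rewrite /clen /=; have := expn_gt0 3 m; lia.
Qed.
Lemma cnt12 m : (m %% 4 = 3)%N -> (1 <= m)%N ->
  count (Tset 1 2 m) (iota 0 (clen m)) = (clen m %/ 2 - 1)%N.
Proof.
move=> hm h1; have := cnt_all hm h1 (i1 := 1) (i2 := 2) isT isT isT.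
rewrite /clen /=; have := expn_gt0 3 m; lia.
Qed.
Lemma cnt23 m : (m %% 4 = 3)%N -> (1 <= m)%N ->
  count (Tset 2 3 m) (iota 0 (clen m)) = (clen m %/ 2)%N.
Proof.
move=> hm h1; have := cnt_all hm h1 (i1 := 2) (i2 := 3) isT isT isT.
rewrite /clen /=; have := expn_gt0 3 m; lia.
Qed.
Lemma cnt01 m : (m %% 4 = 3)%N -> (1 <= m)%N ->
  count (Tset 0 1 m) (iota 0 (clen m)) = (clen m %/ 2 - 1)%N.
Proof.
move=> hm h1; have := cnt_all hm h1 (i1 := 0) (i2 := 1) isT isT isT.
rewrite /clen /=; have := expn_gt0 3 m; lia.
Qed.

Local Open Scope ring_scope.
Lemma Tset_rot m i1 i2 j : (1 <= m)%N -> (j < clen m)%N ->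
  Tset i1 i2 m ((3 * j) %% clen m) = Tset i1 i2 m j.
Proof.
move=> hm hj.
have h3 : (3 <= 3 ^ m)%N by rewrite -{1}(expn1 3) leq_exp2l.
have n_gt0 : (0 < clen m)%N by rewrite /clen; lia.
have hinv : ((3 ^ (m - 1) * ((3 * j) %% clen m)) %% clen m = j)%N.
  rewrite modnMmr mulnA -expnSr.
  have -> : (m - 1).+1 = m by lia.
  have -> : (3 ^ m * j = j * clen m + j)%N.
    rewrite /clen mulnBr muln1; have := expn_gt0 3 m; nia.
  by rewrite modnMDl modn_small.
case: (posnP j) => [->|jpos]; first by rewrite muln0 mod0n.
have hpos : (0 < (3 * j) %% clen m)%N.
  rewrite lt0n; apply/negP => /eqP e; move: hinv; rewrite e muln0 mod0n; lia.
rewrite /Tset jpos hpos /=.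
have -> : ((3 * j) %% clen m <= clen m - 1)%N by have := ltn_pmod (3 * j) n_gt0; lia.
have -> : (j <= clen m - 1)%N by lia.
rewrite /=.
case: m hm hj {hinv hpos n_gt0 h3} => [//|k] _ hj.
by rewrite /clen w3_rot.
Qed.
Definition inF3h (F : fieldType) (H : 3%N \in [pchar F]) : 'F_3 -> F := inF3 F.

Lemma inF3_nat (F : fieldType) (H : 3%N \in [pchar F]) n :
  inF3 F (n%:R : 'F_3) = n%:R :> F.
Proof. by rewrite /inF3 val_Fp_nat // GRing.natr_mod_pchar. Qed.

Lemma F3_nat (x : 'F_3) : x = (x : nat)%:R.
Proof. by rewrite natr_Zp. Qed.

Lemma neg3 (R : pzRingType) (y : nat) : 3%:R = 0 :> R -> - y%:R = (2 * y)%:R :> R.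
Proof.
move=> h3; apply/eqP; rewrite eq_sym -subr_eq0 opprK -natrD.
have -> : (2 * y + y = 3 * y)%N by lia.
by rewrite natrM h3 mul0r.
Qed.

Lemma inF3hB (F : fieldType) (H : 3%N \in [pchar F]) : zmod_morphism (inF3h H).
Proof.
move=> x y; rewrite /inF3h [x]F3_nat [y]F3_nat.
rewrite neg3 //.
have -> : ((x : nat)%:R + (2 * y)%:R : 'F_3) = (x + 2 * y)%:R by rewrite natrD.
rewrite !inF3_nat // natrD neg3 //.
all: try exact: (pcharf0 H). all: try by []. by apply: val_inj.
Qed.

Lemma inF3hM (F : fieldType) (H : 3%N \in [pchar F]) : monoid_morphism (inF3h H).
Proof.
split; first by rewrite /inF3h /inF3.
move=> x y; rewrite /inF3h [x]F3_nat [y]F3_nat.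
have -> : ((x : nat)%:R * (y : nat)%:R : 'F_3) = (x * y)%:R by rewrite natrM.
by rewrite !inF3_nat // natrM.
Qed.

HB.instance Definition _ (F : fieldType) (H : 3%N \in [pchar F]) :=
  GRing.isZmodMorphism.Build 'F_3 F (inF3h H) (inF3hB H).
HB.instance Definition _ (F : fieldType) (H : 3%N \in [pchar F]) :=
  GRing.isMonoidMorphism.Build 'F_3 F (inF3h H) (inF3hM H).

Lemma gpoly_frob (F : fieldType) (H : 3%N \in [pchar F]) m (alpha : F) i1 i2 :
  (1 <= m)%N -> (clen m).-primitive_root alpha ->
  map_poly (pFrobenius_aut H) (gpoly alpha i1 i2 m) = gpoly alpha i1 i2 m.
Proof.
move=> hm prim.
have h3 : (3 <= 3 ^ m)%N by rewrite -{1}(expn1 3) leq_exp2l.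
have n_gt0 : (0 < clen m)%N by rewrite /clen; lia.
rewrite /gpoly map_prod_XsubC !big_mkord.
pose h (j : 'I_(clen m)) : 'I_(clen m) := Ordinal (ltn_pmod (3 * j) n_gt0).
pose hi (j : 'I_(clen m)) : 'I_(clen m) := Ordinal (ltn_pmod (3 ^ (m - 1) * j) n_gt0).
have hK : cancel h hi.
  move=> j; apply: val_inj => /=.
  rewrite modnMmr mulnA -expnSr.
  have -> : (m - 1).+1 = m by lia.
  have -> : (3 ^ m * j = j * clen m + j)%N.
    rewrite /clen mulnBr muln1; have := expn_gt0 3 m; nia.
  by rewrite modnMDl modn_small.
rewrite [RHS](reindex_inj (can_inj hK)) /=.
apply: eq_big => j.
  by rewrite Tset_rot.
move=> _; by rewrite pFrobenius_autE -exprM prim_expr_mod // mulnC.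
Qed.

Definition toF3 (F : fieldType) (c : F) : 'F_3 :=
  if c == 0 then 0 else if c == 1 then 1 else -1.

Lemma toF3K (F : fieldType) (H : 3%N \in [pchar F]) (c : F) :
  c ^+ 3 = c -> inF3h H (toF3 c) = c.
Proof.
move=> hc; rewrite /toF3.
case: eqP => [->|c0] /=; first exact: (raddf0 (inF3h H)).
case: eqP => [->|c1] /=; first exact: (rmorph1 (inF3h H)).
rewrite (rmorphN1 (inF3h H)).
have : c * (c - 1) * (c + 1) = c ^+ 3 - c by ring.
rewrite hc subrr => /eqP.
rewrite !mulf_eq0 subr_eq0 => /orP [/orP [/eqP //|/eqP //]|].
by rewrite addr_eq0 => /eqP.
Qed.

Definition g0 (F : fieldType) (alpha : F) i1 i2 m : {poly 'F_3} :=
  \poly_(i < size (gpoly alpha i1 i2 m)) toF3 (gpoly alpha i1 i2 m)`_i.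

Lemma g0E (F : fieldType) (H : 3%N \in [pchar F]) m (alpha : F) i1 i2 :
  (1 <= m)%N -> (clen m).-primitive_root alpha ->
  map_poly (inF3h H) (g0 alpha i1 i2 m) = gpoly alpha i1 i2 m.
Proof.
move=> hm prim; apply/polyP => i.
rewrite coef_map coef_poly; case: ltnP => hi; last first.
  by rewrite (raddf0 (inF3h H)) nth_default.
apply: toF3K.
have := congr1 (fun p : {poly F} => p`_i) (gpoly_frob H (alpha := alpha) i1 i2 hm prim).
by rewrite coef_map /= pFrobenius_autE.
Qed.

Lemma gpoly_size (F : fieldType) (alpha : F) i1 i2 m :
  size (gpoly alpha i1 i2 m) = (count (Tset i1 i2 m) (iota 0 (clen m))).+1.
Proof. by rewrite /gpoly -big_filter size_prod_XsubC size_filter /index_iota subn0. Qed.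

Lemma gpoly_dvd (F : fieldType) (alpha : F) i1 i2 m :
  (clen m).-primitive_root alpha -> gpoly alpha i1 i2 m %| 'X^(clen m) - 1.
Proof.
move=> prim; rewrite -(factor_Xn_sub_1 prim) (bigID (Tset i1 i2 m)) /=.
exact: dvdp_mulr.
Qed.

Lemma wpolyE n (c : 'rV['F_3]_n) : wpoly c = rVpoly c.
Proof.
rewrite /rVpoly poly_def /wpoly; apply: eq_bigr => i _.
by rewrite mul_polyC valK.
Qed.

Lemma size_rVpoly n (c : 'rV['F_3]_n) : (size (rVpoly c) <= n)%N.
Proof. exact: size_poly. Qed.

Lemma in_codeP (F : fieldType) (H : 3%N \in [pchar F]) m (alpha : F) i1 i2 :
  (1 <= m)%N -> (clen m).-primitive_root alpha ->
  forall c : 'rV['F_3]_(clen m), in_code alpha i1 i2 c <-> g0 alpha i1 i2 m %| rVpoly c.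
Proof.
move=> hm prim c.
have h3 : (3 <= 3 ^ m)%N by rewrite -{1}(expn1 3) leq_exp2l.
have n_gt0 : (0 < clen m)%N by rewrite /clen; lia.
have E p : map_poly (inF3 F) p = map_poly (inF3h H) p by [].
rewrite /in_code; split.
  case=> a; rewrite !E => ha.
  have : gpoly alpha i1 i2 m %| map_poly (inF3h H) (wpoly c).
    by rewrite ha -dvdp_mod ?gpoly_dvd // dvdp_mull.
  by rewrite -(g0E H i1 i2 hm prim) dvdp_map wpolyE.
move=> /dvdpP [q qE]; exists q; rewrite !E -(g0E H i1 i2 hm prim) -rmorphM.
rewrite -qE modp_small; first by rewrite wpolyE.
rewrite (size_map_poly (inF3h H)) size_XnsubC // ltnS.
exact: size_rVpoly.
Qed.

Definition mulg_rV k n (p : {poly 'F_3}) (b : 'rV['F_3]_k) : 'rV['F_3]_n :=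
  poly_rV (rVpoly b * p).

Lemma mulg_rV_semilinear k n p : semilinear (@mulg_rV k n p).
Proof.
split=> [a u|u v]; rewrite /mulg_rV.
  by rewrite linearZ /= -scalerAl linearZ.
by rewrite linearD /= mulrDl linearD.
Qed.

HB.instance Definition _ k n p :=
  GRing.isSemilinear.Build 'F_3 'rV['F_3]_k 'rV['F_3]_n _ (@mulg_rV k n p)
    (@mulg_rV_semilinear k n p).

Lemma img_dim k n (p : {poly 'F_3}) : p != 0 -> (k + size p = n.+1)%N ->
  (forall c : 'rV['F_3]_n, c \in limg (linfun (@mulg_rV k n p)) <-> p %| rVpoly c)
  /\ \dim (limg (linfun (@mulg_rV k n p))) = k.
Proof.
move=> p0 hs; have sp : (0 < size p)%N by rewrite size_poly_gt0.
split.
  move=> c; split.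
    case/memv_imgP => b _ ->; rewrite lfunE /= /mulg_rV poly_rV_K ?dvdp_mull //.
    apply: leq_trans (size_mul_leq _ _) _.
    rewrite -subn1; apply: (@leq_trans (k + size p - 1)); last lia.
    by rewrite leq_sub2r // leq_add2r size_rVpoly.
  case/dvdpP => q qE; apply/memv_imgP; exists (poly_rV q : 'rV_k); first exact: memvf.
  rewrite lfunE /= /mulg_rV poly_rV_K; first by rewrite -qE rVpolyK.
  have := size_rVpoly c; rewrite qE.
  have [->|q0] := eqVneq q 0; first by rewrite size_poly0.
  rewrite size_mul // -subn1 => h. rewrite -(leq_add2r (size p)) hs. by rewrite leq_subLR add1n in h.
have inj : injective (linfun (@mulg_rV k n p)).
  move=> b1 b2; rewrite !lfunE /= /mulg_rV => /(congr1 rVpoly).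
  have sz (b : 'rV['F_3]_k) : (size (rVpoly b * p)%R <= n)%N.
    apply: leq_trans (size_mul_leq _ _) _.
    rewrite -subn1; apply: (@leq_trans (k + size p - 1)); last lia.
    by rewrite leq_sub2r // leq_add2r size_rVpoly.
  rewrite !poly_rV_K // => /(mulIf p0).
  exact: (can_inj rVpolyK).
have := limg_ker_dim (linfun (@mulg_rV k n p)) fullv.
have /eqP -> : lker (linfun (@mulg_rV k n p)) == 0%VS by apply/lker0P.
by rewrite capv0 dimv0 add0n dimvf dim_matrix => ->; apply: mul1n.
Qed.

Lemma code_dim_gen (F : fieldType) (H : 3%N \in [pchar F]) m (alpha : F) i1 i2 :
  (1 <= m)%N -> (clen m).-primitive_root alpha ->
  code_dim alpha i1 i2 m (clen m - count (Tset i1 i2 m) (iota 0 (clen m))).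
Proof.
move=> hm prim.
set d := count _ _.
have sg0 : size (g0 alpha i1 i2 m) = d.+1.
  by rewrite -(size_map_poly (inF3h H)) g0E // gpoly_size.
have g00 : g0 alpha i1 i2 m != 0 by rewrite -size_poly_gt0 sg0.
have hd : (d <= clen m)%N by rewrite /d; apply: leq_trans (count_size _ _) _; rewrite size_iota.
have hs : ((clen m - d) + size (g0 alpha i1 i2 m) = (clen m).+1)%N by rewrite sg0; lia.
have [V1 V2] := img_dim g00 hs.
exists (limg (linfun (@mulg_rV (clen m - d) (clen m) (g0 alpha i1 i2 m)))); split => //.
move=> c; split => h.
  by apply/(in_codeP H i1 i2 hm prim); apply/V1.
by apply/V1; apply/(in_codeP H i1 i2 hm prim).
Qed.

Theorem theorem1 (m : nat) (F : finFieldType) (alpha : F) :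
  (m %% 4 = 3)%N -> (3 <= m)%N ->
  #|F| = (3 ^ m)%N ->
  (clen m).-primitive_root alpha ->
  (code_dim alpha 0 3 m (clen m %/ 2) /\
   code_dim alpha 1 2 m ((clen m + 2) %/ 2)) /\
  (code_dim alpha 2 3 m (clen m %/ 2) /\
   code_dim alpha 0 1 m ((clen m + 2) %/ 2)).
Proof.
move=> hm4 hm3 cardF prim.
have H : (3 \in [pchar F])%N by apply: (card_finPcharP cardF).
have hm : (1 <= m)%N by lia.
have odd3 : ((3 ^ m) %% 2 = 1)%N by rewrite modn2 oddX orbT.
have h3 : (3 <= 3 ^ m)%N by rewrite -{1}(expn1 3) leq_exp2l.
have D i1 i2 k : (clen m - count (Tset i1 i2 m) (iota 0 (clen m)) = k)%N ->
    code_dim alpha i1 i2 m k.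
  by move=> <-; apply: code_dim_gen.
split; split; apply: D.
- rewrite cnt03 // /clen; lia.
- rewrite cnt12 // /clen; lia.
- rewrite cnt23 // /clen; lia.
- rewrite cnt01 // /clen; lia.
Qed.
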